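(* Let $a\in\mathbb{R}\setminus\{0\}$, $B>0$, and set $\kappa=\min\{1/8,\ B/18,\ B/(8|a|),\ |a|/8,\ |a|B/4,\ \sqrt{|a|}/2\}$. Let $D(\varepsilon,s)=-\varepsilon s^2+is+\varepsilon a$. Then there exists $\varepsilon_1>0$ such that $$|D(\varepsilon,s)|\ge \kappa\,\max\{\min\{1,s^2\},|\varepsilon|^2\}$$ for all $s\in\mathbb{R}$ and all $\varepsilon\in\mathbb{C}$ with $|\mathrm{Re}\,\varepsilon|\ge B(\mathrm{Im}\,\varepsilon)^2$ and $0<|\varepsilon|<2\varepsilon_1$. *)

(* Defs.v *)
From Stdlib Require Import Reals Lra.
Open Scope R_scope.

Definition Cplx : Type := (R * R)%type.
Definition Re (z : Cplx) : R := fst z.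
Definition Im (z : Cplx) : R := snd z.
Definition RtoC (x : R) : Cplx := (x, 0).
Definition Ci : Cplx := (0, 1).
Definition Cadd (z w : Cplx) : Cplx := (Re z + Re w, Im z + Im w).
Definition Copp (z : Cplx) : Cplx := (- Re z, - Im z).
Definition Cmul (z w : Cplx) : Cplx :=
  (Re z * Re w - Im z * Im w, Re z * Im w + Im z * Re w).
Definition Cnorm (z : Cplx) : R := sqrt (Re z ^ 2 + Im z ^ 2).

Definition Dsym (a : R) (eps : Cplx) (s : R) : Cplx :=
  Cadd (Cadd (Copp (Cmul eps (RtoC (s ^ 2)))) (Cmul Ci (RtoC s)))
       (Cmul eps (RtoC a)).

Definition kappa (a B : R) : R :=
  Rmin (/ 8) (Rmin (B / 18) (Rmin (B / (8 * Rabs a))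
    (Rmin (Rabs a / 8) (Rmin (Rabs a * B / 4) (sqrt (Rabs a) / 2))))).

(* Main.v *)
Require Import Defs.
From Stdlib Require Import Reals Lra Psatz.
Open Scope R_scope.

Lemma absle p q : Rabs p <= sqrt (p^2+q^2).
Proof. rewrite <- sqrt_Rsqr_abs. apply sqrt_le_1_alt. unfold Rsqr. nra. Qed.
Lemma absle2 p q : Rabs q <= sqrt (p^2+q^2).
Proof. rewrite Rplus_comm. apply absle. Qed.
Lemma tri p q : Rabs (p+q) >= Rabs q - Rabs p.
Proof. split_Rabs; lra. Qed.
Lemma abs_sq p : Rabs p ^ 2 = p ^ 2.
Proof. split_Rabs; nra. Qed.

Theorem lemma3p1 (a B : R) (ha : a <> 0) (hB : 0 < B) :
  exists eps1 : R, 0 < eps1 /\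
    forall (s : R) (eps : Cplx),
      Rabs (Re eps) >= B * (Im eps) ^ 2 ->
      0 < Cnorm eps -> Cnorm eps < 2 * eps1 ->
      Cnorm (Dsym a eps s) >=
        kappa a B * Rmax (Rmin 1 (s ^ 2)) (Cnorm eps ^ 2).
Proof.
  set (A := Rabs a).
  assert (hA : 0 < A) by (apply Rabs_pos_lt; exact ha).
  set (c := A/2 + 1/8).
  assert (hc : 0 < c) by (unfold c; lra).
  exists (Rmin (1/2) (Rmin (1/(2*B)) (A/(4*c^2)))).
  assert (h1 : 0 < 1/(2*B)) by (apply Rdiv_lt_0_compat; lra).
  assert (h2 : 0 < A/(4*c^2)) by (apply Rdiv_lt_0_compat; nra).
  split.
  { apply Rmin_pos; [lra| apply Rmin_pos; lra]. }
  intros s [x y] hxy hr hr2.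
  unfold Re, Im in hxy; cbn [fst snd] in hxy.
  set (e1 := Rmin (1/2) (Rmin (1/(2*B)) (A/(4*c^2)))) in *.
  assert (e1a : e1 <= 1/2) by apply Rmin_l.
  assert (e1b : e1 <= 1/(2*B)) by (eapply Rle_trans; [apply Rmin_r| apply Rmin_l]).
  assert (e1c : e1 <= A/(4*c^2)) by (eapply Rle_trans; [apply Rmin_r| apply Rmin_r]).
  set (r := Cnorm (x, y)) in *.
  assert (hr2e : r ^ 2 = x^2 + y^2).
  { unfold r, Cnorm, Re, Im; cbn [fst snd]. rewrite <- Rsqr_pow2, Rsqr_sqrt; [ring|nra]. }
  assert (r1 : r < 1) by lra.
  assert (rB : r * B < 1).
  { assert (2*e1*B <= 1); [| nra].
    apply (Rmult_le_compat_r B) in e1b; [|lra]. unfold Rdiv in e1b.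
    rewrite Rmult_1_l, Rinv_mult, Rmult_assoc, Rinv_l in e1b; lra. }
  assert (rc : r * (2*c^2) < A).
  { assert (2*e1*(2*c^2) <= A); [| nra].
    apply (Rmult_le_compat_r (4*c^2)) in e1c; [|nra]. unfold Rdiv in e1c.
    rewrite Rmult_assoc, Rinv_l in e1c; nra. }
  set (k := kappa a B).
  assert (k1 : k <= /8) by apply Rmin_l.
  assert (k2 : k <= B/18) by (unfold k, kappa; eapply Rle_trans; [apply Rmin_r| apply Rmin_l]).
  assert (k3 : k <= B/(8*A)) by (unfold k, kappa; do 2 (eapply Rle_trans; [apply Rmin_r|]); apply Rmin_l).
  assert (k5 : k <= A*B/4) by (unfold k, kappa; do 4 (eapply Rle_trans; [apply Rmin_r|]); apply Rmin_l).
  assert (k0 : 0 < k).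
  { unfold k, kappa. fold A.
    assert (0 < sqrt A) by (apply sqrt_lt_R0; lra).
    repeat apply Rmin_pos; try lra; try (apply Rdiv_lt_0_compat; nra). }
  assert (k3' : k * (8*A) <= B).
  { apply (Rmult_le_compat_r (8*A)) in k3; [|lra]. unfold Rdiv in k3.
    rewrite Rmult_assoc, Rinv_l in k3; lra. }
  set (u := a - s^2).
  assert (HD : Dsym a (x, y) s = (x * u, y * u + s)).
  { unfold Dsym, Cadd, Copp, Cmul, RtoC, Ci, Re, Im, u; simpl. f_equal; ring. }
  rewrite HD. unfold Cnorm, Re, Im; cbn [fst snd].
  set (N := sqrt ((x*u)^2 + (y*u+s)^2)).
  assert (N1 : Rabs x * Rabs u <= N) by (rewrite <- Rabs_mult; apply absle).
  assert (N2 : Rabs s - Rabs y * Rabs u <= N).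
  { pose proof (tri (y*u) s). rewrite Rabs_mult in H.
    pose proof (absle2 (x*u) (y*u+s)). fold N in H0. lra. }
  set (X := Rabs x) in *. set (Y := Rabs y) in *. set (S := Rabs s) in *.
  set (U := Rabs u) in *.
  assert (X0 : 0 <= X) by apply Rabs_pos.
  assert (Y0 : 0 <= Y) by apply Rabs_pos.
  assert (S0 : 0 <= S) by apply Rabs_pos.
  assert (U0 : 0 <= U) by apply Rabs_pos.
  assert (XX : X^2 = x^2) by apply abs_sq.
  assert (YY : Y^2 = y^2) by apply abs_sq.
  assert (SS : S^2 = s^2) by apply abs_sq.
  assert (Ule : U <= A + S^2).
  { unfold U, u, A. rewrite SS. pose proof (pow2_ge_0 s). split_Rabs; lra. }
  assert (Xr : X <= r) by nra.
  assert (Yr : Y <= r) by nra.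
  rewrite <- YY in hxy.
  set (m := Rmin 1 (s^2)).
  assert (m1 : m <= 1) by apply Rmin_l.
  assert (m2 : m <= S^2) by (rewrite SS; apply Rmin_r).
  assert (m0 : 0 <= m) by (apply Rmin_glb; nra).
  assert (B1 : k * m <= N).
  { destruct (Rle_lt_dec (Y*U) (S/2)) as [H|H].
    - assert (m <= S) by (destruct (Rle_lt_dec 1 S); [lra| assert (S^2 <= S) by nra; lra]). assert (k*m <= m/8) by nra. lra.
    - assert (key : 4*k*m*(S^2+A) <= B*S^2).
      { assert (km0 : 0 <= k*m) by nra. assert (km1 : k*m <= k) by nra.
        assert (S2 : 0 <= S^2) by nra.
        destruct (Rle_lt_dec A (S^2)).
        - assert (k*m*(S^2+A) <= k*m*(2*S^2)) by nra.
          assert (k*m*S^2 <= k*S^2) by nra.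
          assert (k*S^2 <= B/18*S^2) by nra. nra.
        - assert (k*m*(S^2+A) <= k*m*(2*A)) by nra.
          assert (k*(8*A)*m <= B*m) by nra.
          assert (B*m <= B*S^2) by nra. nra. }
      destruct (Rle_lt_dec (k*m) (X*U)) as [H'|H']; [lra|].
      exfalso.
      assert (B*S^2 < 4*U*(X*U)).
      { assert (4*(Y*U)^2 > S^2) by nra. nra. }
      assert (U*(X*U) <= U*(k*m)) by (apply Rmult_le_compat_l; lra).
      assert (U*(k*m) <= (A+S^2)*(k*m)) by (apply Rmult_le_compat_r; nra).
      nra. }
  assert (B2 : k * r^2 <= N).
  { destruct (Rle_lt_dec (A/2) U) as [H|H].
    - assert (B * r^2 <= 2*X) by nra. nra.
    - assert (sA : s^2 > A/2).
      { unfold U, u, A in H |- *. pose proof (pow2_ge_0 s). split_Rabs; lra. }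
      assert (S >= r*c) by nra.
      assert (k*r^2 <= r/8) by nra.
      assert (Y*U <= r*(A/2)) by nra.
      unfold c in *. nra. }
  unfold Rmax. destruct (Rle_dec m (r^2)); lra.
Qed.
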